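(* Let $n\in\mathbb{N}_0$. For each $\mathrm{Z}\in\{\mathrm{I},\mathrm{II},\mathrm{III}\}$, the system $(\gamma^{\mathrm{Z}}b_{n,k})_{k=0}^n$ is a basis of $\mathbb{P}_n([0,1])$ (polynomials of degree $\le n$ on $[0,1]$).
   Context: $\widehat T$ is the triangle with vertices $(0,0),(1,0),(0,1)$. $P_m^{(\alpha,\beta)}$ are the Jacobi polynomials (orthogonal on $[-1,1]$ w.r.t. $(1-x)^\alpha(1+x)^\beta$, normalized by $P_m^{(\alpha,\beta)}(1)=(\alpha+1)_m/m!$), and $P_k^{(0,0)}$ the Legendre polynomials. For $0\le k\le n$, $b_{n,k}(x_1,x_2):=(x_1+x_2)^k P^{(0,2k+1)}_{n-k}(2(x_1+x_2)-1)\,P_k^{(0,0)}\!\left(\frac{x_1-x_2}{x_1+x_2}\right)$ (a polynomial of degree $n$). The restriction operators are $\gamma^{\mathrm{I}}u:=u(\cdot,0)$, $\gamma^{\mathrm{II}}u:=u(0,\cdot)$, $\gamma^{\mathrm{III}}u:=u(1-\cdot,\cdot)$, mapping functions on $\widehat T$ to functions on $[0,1]$. *)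

(* Defs.v *)
From HB Require Import structures.
From mathcomp Require Import all_boot all_order all_algebra.
Set Implicit Arguments. Unset Strict Implicit. Unset Printing Implicit Defensive.
Import Order.TTheory GRing.Theory Num.Theory.
Local Open Scope ring_scope.

Section Defs.
Variable R : realFieldType.

(* Jacobi polynomial P_m^{(a,b)} for integer parameters a, b >= 0, via the
   classical explicit formula (DLMF 18.5.8):
   P_m^{(a,b)}(x) = sum_{s=0}^m C(m+a, m-s) C(m+b, s) ((x-1)/2)^s ((x+1)/2)^(m-s). *)
Definition jacobi (a b m : nat) : {poly R} :=
  \sum_(s < m.+1)
     ('C(m + a, m - s) * 'C(m + b, s))%:R *:
       ((2^-1 *: ('X - 1)) ^+ s * (2^-1 *: ('X + 1)) ^+ (m - s)).

Definition legendre (k : nat) : {poly R} := jacobi 0 0 k.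

(* Homogenization: (x1+x2)^k p((x1-x2)/(x1+x2)) written as the polynomial
   sum_j p_j (x1-x2)^j (x1+x2)^(k-j)  (for size p <= k+1); it agrees with
   the rational expression whenever x1 + x2 <> 0. *)
Definition homog (k : nat) (p : {poly R}) (x1 x2 : R) : R :=
  \sum_(j < k.+1) p`_j * (x1 - x2) ^+ j * (x1 + x2) ^+ (k - j).

Definition bnk (n k : nat) (x1 x2 : R) : R :=
  (jacobi 0 (2 * k + 1)%N (n - k)).[2 * (x1 + x2) - 1] * homog k (legendre k) x1 x2.

Inductive edge := EI | EII | EIII.

Definition gamma (Z : edge) (u : R -> R -> R) (t : R) : R :=
  match Z with
  | EI => u t 0
  | EII => u 0 t
  | EIII => u (1 - t) t
  end.

Definition inPn01 (n : nat) (f : R -> R) : Prop :=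
  exists p : {poly R}, (size p <= n.+1)%N /\
    forall t, 0 <= t <= 1 -> f t = p.[t].

Definition is_basis_Pn01 (n : nat) (q : 'I_n.+1 -> R -> R) : Prop :=
  (forall k, inPn01 n (q k)) /\
  forall f, inPn01 n f ->
    exists! c : {ffun 'I_n.+1 -> R},
      forall t, 0 <= t <= 1 -> f t = \sum_(k < n.+1) c k * q k t.

End Defs.

(* Main.v *)
Require Import Defs.
From HB Require Import structures.
From mathcomp Require Import all_boot all_order all_algebra.
From mathcomp Require Import zify ring lra.
Import Order.TTheory GRing.Theory Num.Theory.
Local Open Scope ring_scope.


Lemma poly01_eq0 (R : realFieldType) (h : {poly R}) :
  (forall t : R, 0 <= t <= 1 -> h.[t] = 0) -> h = 0.
Proof.
move=> H.
have U : uniq ([seq (i.+1%:R)^-1 | i <- iota 0 (size h)] : seq R).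
  rewrite map_inj_uniq ?iota_uniq // => i j /invr_inj /eqP.
  by rewrite eqr_nat => /eqP [].
have A : all (root h) [seq (i.+1%:R)^-1 | i <- iota 0 (size h)].
  apply/allP => x /mapP [i _ ->]; apply/rootP/H.
  by rewrite invr_ge0 ler0n /= invf_le1 ?ltr0Sn // ler1n.
apply: (roots_geq_poly_eq0 A U).
by rewrite size_map size_iota.
Qed.

Lemma basis_of_polys (R : realFieldType) n (q : 'I_n.+1 -> R -> R) (p : 'I_n.+1 -> {poly R}) :
  (forall k, (size (p k) <= n.+1)%N) ->
  (forall k t, q k t = (p k).[t]) ->
  (\matrix_(k, j) (p k)`_j : 'M[R]_n.+1) \in unitmx ->
  @is_basis_Pn01 R n q.
Proof.
move=> Hs Hq HM; split.
  by move=> k; exists (p k); split=> // t _; exact: Hq.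
move=> f [g [Hg Hf]].
set M := (\matrix_(k, j) (p k)`_j : 'M[R]_n.+1) in HM.
pose v : 'rV[R]_n.+1 := \row_j g`_j.
pose c := v *m invmx M.
have key: forall (d : 'rV_n.+1) t,
    \sum_k d 0 k * q k t = \sum_(j < n.+1) (d *m M) 0 j * t ^+ j.
  move=> d t; under eq_bigr do rewrite Hq (horner_coef_wide _ (Hs _)) mulr_sumr.
  rewrite exchange_big /=; apply: eq_bigr => j _; rewrite !mxE mulr_suml.
  by apply: eq_bigr => k _; rewrite mxE mulrA.
exists [ffun k => c 0 k]; split.
  move=> t Ht; rewrite Hf //.
  under eq_bigr do rewrite ffunE.
  rewrite key mulmxKV // (horner_coef_wide _ Hg); apply: eq_bigr => j _.
  by rewrite mxE.
move=> d Hd; apply/ffunP => k; rewrite ffunE.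
pose e : 'rV_n.+1 := \row_k d k.
suff: c = e by move=> ->; rewrite mxE.
have H0 : (c - e) *m M = 0.
  pose h := \poly_(j < n.+1) ((c - e) *m M) 0 (inord j).
  have hz : h = 0.
    apply: poly01_eq0 => t Ht.
    rewrite horner_poly.
    transitivity (\sum_(j < n.+1) ((c - e) *m M) 0 j * t ^+ j).
      by apply: eq_bigr => j _; rewrite inord_val.
    rewrite -key.
    under eq_bigr do rewrite [X in X * _]mxE [X in _ + X]mxE mulrBl.
    rewrite sumrB.
    have -> : \sum_k c 0 k * q k t = f t.
      rewrite Hf // key mulmxKV // (horner_coef_wide _ Hg); apply: eq_bigr => j _.
      by rewrite mxE.
    rewrite (Hd t Ht); apply/eqP; rewrite subr_eq0; apply/eqP.
    by apply: eq_bigr => i _; rewrite mxE.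
  apply/rowP => j; rewrite [RHS]mxE.
  have := congr1 (fun P : {poly R} => P`_j) hz.
  by rewrite /h coef_poly ltn_ord coef0 inord_val.
apply/eqP; rewrite -subr_eq0; apply/eqP.
by rewrite -(mulmxK HM (c - e)) H0 mul0mx.
Qed.


Section J.
Variable R : realFieldType.

Lemma two_neq0 : (2 : R) != 0.
Proof. by rewrite pnatr_eq0. Qed.

Lemma size_lin_exp (c : R) s : size (('X + c%:P) ^+ s) = s.+1.
Proof.
have nz : (0 < size (('X + c%:P) ^+ s))%N.
  by rewrite size_poly_gt0 expf_neq0 // -size_poly_eq0 size_XaddC.
by rewrite -(prednK nz) size_exp size_XaddC mul1n.
Qed.

Lemma term_eq m (s : 'I_m.+1) :
  (2^-1 *: ('X - 1)) ^+ s * (2^-1 *: ('X + 1)) ^+ (m - s) =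
  (2^-1 : R) ^+ m *: ((('X + (-1)%:P) ^+ s) * ('X + 1%:P) ^+ (m - s)).
Proof.
rewrite !exprZn -scalerAl -scalerAr scalerA -exprD subnKC; last by rewrite -ltnS.
by rewrite (polyCN (1 : R)) polyC1.
Qed.

Lemma Q_monic m s : (('X + (-1)%:P) ^+ s * ('X + 1%:P) ^+ (m - s) : {poly R}) \is monic.
Proof. by rewrite monicMl ?monic_exp ?monicXaddC. Qed.

Lemma Q_size m (s : 'I_m.+1) : size (('X + (-1)%:P) ^+ s * ('X + 1%:P) ^+ (m - s) : {poly R}) = m.+1.
Proof.
rewrite size_Mmonic ?monic_exp ?monicXaddC ?size_lin_exp //.
  by rewrite addSn addnS /= subnKC // -ltnS.
by rewrite -size_poly_eq0 size_lin_exp.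
Qed.

Lemma jacobi_size a b m : (size (@jacobi R a b m) <= m.+1)%N.
Proof.
rewrite /jacobi; apply: (big_ind (fun p : {poly R} => (size p <= m.+1)%N)).
- by rewrite size_poly0.
- by move=> p q Hp Hq; apply: leq_trans (size_polyD _ _) _; rewrite geq_max Hp Hq.
- move=> s _; apply: leq_trans (size_scale_leq _ _) _.
  by rewrite term_eq; apply: leq_trans (size_scale_leq _ _) _; rewrite Q_size.
Qed.

Lemma jacobi_coef a b m :
  (@jacobi R a b m)`_m = (\sum_(s < m.+1) ('C(m + a, m - s) * 'C(m + b, s)))%:R * 2^-1 ^+ m.
Proof.
rewrite /jacobi coef_sum natr_sum mulr_suml; apply: eq_bigr => s _.
rewrite coefZ term_eq coefZ.
have := Q_monic m s; move/monicP; rewrite /lead_coef Q_size /= => ->.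
by rewrite mulr1.
Qed.

Lemma legendre_coef_neq0 k : (@legendre R k)`_k != 0.
Proof.
rewrite /legendre jacobi_coef mulf_neq0 ?expf_neq0 ?invr_eq0 ?two_neq0 //.
rewrite pnatr_eq0 -lt0n big_ord_recl /= subn0 !addn0 binn bin0.
by [].
Qed.

Lemma legendre_size k : size (@legendre R k) = k.+1.
Proof.
apply/eqP; rewrite eqn_leq jacobi_size /=.
rewrite ltnNge; apply/negP => /leq_sizeP/(_ k (leqnn k)) H.
by move: (legendre_coef_neq0 k); rewrite H eqxx.
Qed.

Lemma h2 : (2^-1 : R) * (1 + 1) = 1.
Proof. by rewrite mulVf // two_neq0. Qed.

Lemma h2n : (2^-1 : R) * (-1 - 1) = -1.
Proof. by rewrite -opprD mulrN h2. Qed.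

Lemma jacobi_at1 a b m : (@jacobi R a b m).[1] = 'C(m + a, m)%:R.
Proof.
rewrite /jacobi horner_sum big_ord_recl /= big1 ?addr0.
  by rewrite !hornerE /= h2 subn0 bin0 muln1 mulr1 expr1n mulr1.
move=> s _; rewrite !hornerE /= subrr mulr0 expr0n /=.
by rewrite mulr0 mul0r.
Qed.

Lemma jacobi_atm1 a b m : (@jacobi R a b m).[-1] = (-1) ^+ m * 'C(m + b, m)%:R.
Proof.
rewrite /jacobi horner_sum big_ord_recr /= big1 ?add0r.
  rewrite !hornerE /= h2n subnn bin0 mul1n addNr mulr0 expr0 mulr1 mulrC //.
move=> s _; rewrite !hornerE /= addNr mulr0 expr0n.
by rewrite subn_eq0 leqNgt ltn_ord /= mulr0.
Qed.

End J.


Section M.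
Variable R : realFieldType.
Variable n : nat.

Definition q1 : {poly R} := 2%:P * 'X + (-1)%:P.
Definition q3 : {poly R} := (-2)%:P * 'X + 1%:P.
Definition JJ (k : nat) : {poly R} := jacobi R 0 (2 * k + 1) (n - k).
Definition LL (k : nat) : {poly R} := legendre R k.

Lemma size_q1 : size q1 = 2%N.
Proof. by rewrite /q1 size_MXaddC polyC_eq0 size_polyC (negbTE (two_neq0 R)). Qed.

Lemma size_q3 : size q3 = 2%N.
Proof. by rewrite /q3 size_MXaddC polyC_eq0 size_polyC oppr_eq0 (negbTE (two_neq0 R)). Qed.

Lemma homog_I k (p : {poly R}) t : (size p <= k.+1)%N -> homog k p t 0 = t ^+ k * p.[1].
Proof.
move=> Hs; rewrite /homog (horner_coef_wide _ Hs) mulr_sumr; apply: eq_bigr => j _.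
have hj : (j <= k)%N by rewrite -ltnS.
by rewrite subr0 addr0 -mulrA -exprD subnKC // expr1n mulr1 mulrC.
Qed.

Lemma homog_II k (p : {poly R}) t : (size p <= k.+1)%N -> homog k p 0 t = t ^+ k * p.[-1].
Proof.
move=> Hs; rewrite /homog (horner_coef_wide _ Hs) mulr_sumr; apply: eq_bigr => j _.
have hj : (j <= k)%N by rewrite -ltnS.
rewrite sub0r add0r exprNn -!mulrA -exprD subnKC //.
by rewrite mulrA mulrC.
Qed.

Lemma homog_III k (p : {poly R}) t : (size p <= k.+1)%N -> homog k p (1 - t) t = p.[1 - t - t].
Proof.
move=> Hs; rewrite /homog (horner_coef_wide _ Hs); apply: eq_bigr => j _.
by rewrite subrK expr1n mulr1.
Qed.

Definition P12 (a : nat -> R) (k : nat) : {poly R} := a k *: ('X^k * (JJ k \Po q1)).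

Lemma P12_size a (k : 'I_n.+1) : (size (P12 a k) <= n.+1)%N.
Proof.
apply: leq_trans (size_scale_leq _ _) _.
have h1 := size_mul_leq ('X^k) (JJ k \Po q1).
have h2 := size_comp_poly_leq (JJ k) q1.
have h3 := jacobi_size R 0 (2 * k + 1) (n - k).
rewrite size_polyXn in h1; rewrite size_q1 /= in h2.
have hk := ltn_ord k.
rewrite /JJ in h1 h2 *.
move: h1 h2 h3 hk.
move: (size (jacobi R 0 (2 * k + 1) (n - k))) => A.
move: (size (jacobi R 0 (2 * k + 1) (n - k) \Po q1)) => B.
move: (size _) => C.
move: (nat_of_ord k) => kk.
rewrite muln1.
lia.
Qed.

Lemma P12_unit (a : nat -> R) : (forall k, a k != 0) ->
  (\matrix_(k, j) (P12 a (k : 'I_n.+1))`_j : 'M[R]_n.+1) \in unitmx.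
Proof.
move=> Ha; rewrite unitmxE unitfE -det_tr det_trig.
  apply/prodf_neq0 => i _; rewrite !mxE coefZ coefXnM ltnn subnn -horner_coef0.
  rewrite horner_comp /q1 !hornerE.
  rewrite mulf_neq0 // /JJ jacobi_atm1 mulf_neq0 //.
    by rewrite expf_neq0 // oppr_eq0 oner_eq0.
  by rewrite pnatr_eq0 -lt0n bin_gt0 leq_addr.
apply/is_trig_mxP => i j lt; by rewrite !mxE coefZ coefXnM lt mulr0.
Qed.

Lemma gI (k : 'I_n.+1) t : gamma EI (@bnk R n k) t = (P12 (fun k => (LL k).[1]) k).[t].
Proof.
rewrite /gamma /bnk homog_I ?legendre_size // /P12 hornerZ hornerM hornerXn horner_comp.
have -> : q1.[t] = 2 * (t + 0) - 1 by rewrite /q1 !hornerE; lra.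
rewrite /JJ /LL; ring.
Qed.

Lemma gII (k : 'I_n.+1) t : gamma EII (@bnk R n k) t = (P12 (fun k => (LL k).[-1]) k).[t].
Proof.
rewrite /gamma /bnk homog_II ?legendre_size // /P12 hornerZ hornerM hornerXn horner_comp.
have -> : q1.[t] = 2 * (0 + t) - 1 by rewrite /q1 !hornerE; lra.
rewrite /JJ /LL; ring.
Qed.

Definition P3 (k : nat) : {poly R} := LL k \Po q3.

Lemma P3_size (k : nat) : size (P3 k) = k.+1.
Proof. by rewrite /P3 size_comp_poly2 ?size_q3 // /LL legendre_size. Qed.

Lemma gIII (k : 'I_n.+1) t : gamma EIII (@bnk R n k) t = (P3 k).[t].
Proof.
rewrite /gamma /bnk homog_III ?legendre_size // /P3 horner_comp.
have -> : (2 * (1 - t + t) - 1 : R) = 1 by lra.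
rewrite jacobi_at1 addn0 binn mul1r.
have -> : q3.[t] = 1 - t - t by rewrite /q3 !hornerE; lra.
by [].
Qed.

Lemma P3_unit : (\matrix_(k, j) (P3 (k : 'I_n.+1))`_j : 'M[R]_n.+1) \in unitmx.
Proof.
rewrite unitmxE unitfE det_trig.
  apply/prodf_neq0 => i _; rewrite !mxE.
  have -> : (P3 i)`_i = lead_coef (P3 i) by rewrite /lead_coef P3_size.
  rewrite /P3 lead_coef_comp ?size_q3 // mulf_neq0 ?expf_neq0 //.
    by rewrite lead_coef_eq0 -size_poly_eq0 /LL legendre_size.
  by rewrite lead_coef_eq0 -size_poly_eq0 size_q3.
apply/is_trig_mxP => i j lt; rewrite !mxE nth_default // P3_size //.
Qed.

End M.

Theorem lemma12 (R : realFieldType) (n : nat) (Z : edge) :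
  @is_basis_Pn01 R n (fun k : 'I_n.+1 => gamma Z (@bnk R n k)).
Proof.
case: Z.
- apply: (@basis_of_polys R n _ (fun k => P12 R n (fun k => (LL R k).[1]) k)).
  + by move=> k; apply: P12_size.
  + by move=> k t; apply: gI.
  + apply: P12_unit => k; rewrite /LL /legendre jacobi_at1 addn0 binn oner_eq0 //.
- apply: (@basis_of_polys R n _ (fun k => P12 R n (fun k => (LL R k).[-1]) k)).
  + by move=> k; apply: P12_size.
  + by move=> k t; apply: gII.
  + apply: P12_unit => k; rewrite /LL /legendre jacobi_atm1 addn0 binn mulr1.
    by rewrite expf_neq0 // oppr_eq0 oner_eq0.
- apply: (@basis_of_polys R n _ (fun k => P3 R k)).
  + by move=> k; rewrite P3_size.
  + by move=> k t; apply: gIII.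
  + exact: P3_unit.
Qed.
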